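(* Let $\mathcal X_1=(\Omega_1,S_1)$, $\mathcal X_2=(\Omega_2,S_2)$ be coherent configurations, $\mathcal X=\mathcal X_1\wr\mathcal X_2$ on $\Omega=\Omega_1\times\Omega_2$, and $\Pi\subseteq 2^\Omega$. Suppose that (1) for every $a\in\Omega_2$ the family $\Pi_a=\{\Gamma\cap\Omega_a:\Gamma\in\Pi\}$ is a generalized base of $\mathcal X_{\Omega_a}$, and (2) the family $\{\pi(\Gamma):\Gamma\in\Pi\}$ is a generalized base of $\mathcal X_2$, where $\pi:\Omega\to\Omega_2$ is the projection. Then $\Pi$ is a generalized base of $\mathcal X$.
   Context: A coherent configuration on a finite set $\Omega$ is $\mathcal X=(\Omega,S)$ with $S$ a partition of $\Omega\times\Omega$ such that $1_\Omega$ is a union of elements of $S$, $s^*=\{(\beta,\alpha):(\alpha,\beta)\in s\}\in S$ for $s\in S$, and for $r,s,t\in S$ the number $|\{\gamma:(\alpha,\gamma)\in r,(\gamma,\beta)\in s\}|$ is independent of $(\alpha,\beta)\in t$. Relations are unions of elements of $S$; fibers are sets $\Gamma$ with $1_\Gamma\in S$. $\mathcal X\le\mathcal X'$ if every relation of $\mathcal X$ is a relation of $\mathcal X'$ (fission). Complete: all basic relations singletons. For $\Pi\subseteq2^\Omega$, the $\Pi$-fission is the smallest fission in which each member of $\Pi$ is a union of fibers; $\Pi$ is a generalized base if its $\Pi$-fission is complete. For an equivalence relation $e$ that is a relation of $\mathcal X$ and a class $\Delta$ of $e$, the restriction is $\mathcal X_\Delta=(\Delta,\{s\cap\Delta^2:s\in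 S\}\setminus\{\emptyset\})$, and the quotient $\mathcal X_{\Omega/e}$ is the coherent configuration on $\Omega/e$ with basic relations $\{(\Gamma,\Delta): s\cap(\Gamma\times\Delta)\ne\emptyset\}$, $s\in S$ (nonempty ones). The wreath product $\mathcal X_1\wr\mathcal X_2$ is the smallest coherent configuration $\mathcal X$ on $\Omega_1\times\Omega_2$ such that the equivalence relation $e$ with classes $\Omega_a=\Omega_1\times\{a\}$, $a\in\Omega_2$, is a relation of $\mathcal X$, each restriction $\mathcal X_{\Omega_a}$ is the image of $\mathcal X_1$ under $x\mapsto(x,a)$, and $\mathcal X_{\Omega/e}$ is the image of $\mathcal X_2$ under $a\mapsto\Omega_a$. *)

(* Defs.v *)
From mathcomp Require Import all_boot.
Set Implicit Arguments. Unset Strict Implicit. Unset Printing Implicit Defensive.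

(* A coherent configuration on a point set Om : {set T} (T a finType) is given
   by its set S of basic relations, a set of subsets of T * T. *)

Section CC.
Variable T : finType.

Definition diagS (G : {set T}) : {set T * T} :=
  [set p : T * T | (p.1 == p.2) && (p.1 \in G)].

Definition transp (s : {set T * T}) : {set T * T} :=
  [set p : T * T | (p.2, p.1) \in s].

Definition is_relation (S : {set {set T * T}}) (R : {set T * T}) : Prop :=
  exists2 S' : {set {set T * T}}, S' \subset S & R = cover S'.

Definition is_cc (Om : {set T}) (S : {set {set T * T}}) : Prop :=
  [/\ partition S (setX Om Om),
      is_relation S (diagS Om),
      (forall s, s \in S -> transp s \in S) &
      (forall r s t, r \in S -> s \in S -> t \in S ->
         forall x y x' y', (x, y) \in t -> (x', y') \in t ->
         #|[set g | ((x, g) \in r) && ((g, y) \in s)]| =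
         #|[set g | ((x', g) \in r) && ((g, y') \in s)]|)].

Definition is_fiber (S : {set {set T * T}}) (G : {set T}) : Prop :=
  diagS G \in S.

Definition union_of_fibers (S : {set {set T * T}}) (G : {set T}) : Prop :=
  exists2 F : {set {set T}}, (forall D, D \in F -> is_fiber S D) & G = cover F.

Definition fission (S S' : {set {set T * T}}) : Prop :=
  forall R, is_relation S R -> is_relation S' R.

Definition complete (S : {set {set T * T}}) : Prop :=
  forall s, s \in S -> #|s| = 1%N.

Definition Pi_fission_cond (Om : {set T}) (S : {set {set T * T}})
  (Pi : {set {set T}}) (S' : {set {set T * T}}) : Prop :=
  [/\ is_cc Om S', fission S S' & forall G, G \in Pi -> union_of_fibers S' G].

Definition is_Pi_fission (Om : {set T}) (S : {set {set T * T}})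
  (Pi : {set {set T}}) (S' : {set {set T * T}}) : Prop :=
  Pi_fission_cond Om S Pi S' /\
  (forall S'', Pi_fission_cond Om S Pi S'' -> fission S' S'').

Definition gen_base (Om : {set T}) (S : {set {set T * T}}) (Pi : {set {set T}})
  : Prop :=
  exists2 S', is_Pi_fission Om S Pi S' & complete S'.

Definition restr (S : {set {set T * T}}) (D : {set T}) : {set {set T * T}} :=
  [set s :&: setX D D | s in S] :\ set0.

Definition eclasses (Om : {set T}) (e : {set T * T}) : {set {set T}} :=
  [set [set y in Om | (x, y) \in e] | x in Om].

Definition quot (Om : {set T}) (S : {set {set T * T}}) (e : {set T * T})
  : {set {set {set T} * {set T}}} :=
  [set [set P : {set T} * {set T} |
          [&& P.1 \in eclasses Om e, P.2 \in eclasses Om e &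
              [exists x in P.1, exists y in P.2, (x, y) \in s]]] | s : {set T * T} in S]
  :\ set0.

End CC.

Section Wreath.
Variables T1 T2 : finType.

Definition wr_e : {set (T1 * T2) * (T1 * T2)} :=
  [set p | p.1.2 == p.2.2].

Definition Omega_a (a : T2) : {set T1 * T2} := [set x | x.2 == a].

Definition img1 (S1 : {set {set T1 * T1}}) (a : T2)
  : {set {set (T1 * T2) * (T1 * T2)}} :=
  [set [set ((p.1, a), (p.2, a)) | p in s] | s : {set T1 * T1} in S1].

Definition img2 (S2 : {set {set T2 * T2}})
  : {set {set {set T1 * T2} * {set T1 * T2}}} :=
  [set [set (Omega_a p.1, Omega_a p.2) | p in s] | s : {set T2 * T2} in S2].

Definition wreath_cond (S1 : {set {set T1 * T1}}) (S2 : {set {set T2 * T2}})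
  (S : {set {set (T1 * T2) * (T1 * T2)}}) : Prop :=
  [/\ is_cc [set: T1 * T2] S,
      is_relation S wr_e,
      (forall a, restr S (Omega_a a) = img1 S1 a) &
      quot [set: T1 * T2] S wr_e = img2 S2].

Definition is_wreath (S1 : {set {set T1 * T1}}) (S2 : {set {set T2 * T2}})
  (S : {set {set (T1 * T2) * (T1 * T2)}}) : Prop :=
  wreath_cond S1 S2 S /\
  (forall S', wreath_cond S1 S2 S' -> fission S S').

End Wreath.

(* Main.v *)
Require Import Defs.
From mathcomp Require Import all_boot.
Set Implicit Arguments. Unset Strict Implicit. Unset Printing Implicit Defensive.

Section Gen.
Variable T : finType.
Implicit Types (S Q : {set {set T * T}}) (Om : {set T}).

Lemma part_uniq (U : finType) (P : {set {set U}}) D s t p :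
  partition P D -> s \in P -> t \in P -> p \in s -> p \in t -> s = t.
Proof.
case/and3P=> _ /trivIsetP tI _ sP tP ps pt.
apply/eqP; apply/negPn/negP => /(tI _ _ sP tP) dis.
by move: dis => /disjoint_setI0 /setP /(_ p); rewrite !inE ps pt.
Qed.

Lemma part_cover (U : finType) (P : {set {set U}}) D p :
  partition P D -> p \in D -> exists2 s, s \in P & p \in s.
Proof.
case/and3P=> /eqP <- _ _ /bigcupP[s sP ps]; by exists s.
Qed.

Lemma part_sub (U : finType) (P : {set {set U}}) D s :
  partition P D -> s \in P -> s \subset D.
Proof.
case/and3P=> /eqP <- _ _ sP; apply/subsetP => p ps; apply/bigcupP; by exists s.
Qed.

Lemma part_neq0 (U : finType) (P : {set {set U}}) D s :
  partition P D -> s \in P -> exists p, p \in s.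
Proof.
case/and3P=> _ _ n0 sP; apply/set0Pn; apply: contraNneq n0 => <-; done.
Qed.

Lemma rel_of (U : finType) (P : {set {set U * U}}) (D : {set U * U}) (R : {set U * U}) :
  partition P D -> R \subset D ->
  (forall s, s \in P -> forall p, p \in s -> p \in R -> s \subset R) ->
  is_relation P R.
Proof.
move=> hP RD H; exists [set s in P | s \subset R].
  by apply/subsetP => s; rewrite inE => /andP[].
apply/setP => p; apply/idP/bigcupP.
  move=> pR; have [s sP ps] := part_cover hP (subsetP RD _ pR).
  by exists s => //; rewrite inE sP (H s sP p).
by case=> s; rewrite inE => /andP[_ /subsetP]; apply.
Qed.

Lemma rel_sub (U : finType) (P : {set {set U * U}}) (D : {set U * U}) (R : {set U * U}) s p :
  partition P D -> is_relation P R -> s \in P -> p \in s -> p \in R -> s \subset R.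
Proof.
move=> hP [A AP ->] sP ps /bigcupP[u uA pu].
have uP := subsetP AP _ uA.
rewrite (part_uniq hP sP uP ps pu); apply/subsetP => q qu; apply/bigcupP; by exists u.
Qed.

Lemma rel_subD (U : finType) (P : {set {set U * U}}) (D : {set U * U}) (R : {set U * U}) :
  partition P D -> is_relation P R -> R \subset D.
Proof.
move=> hP [A AP ->]; apply/subsetP => p /bigcupP[u uA pu].
exact: subsetP (part_sub hP (subsetP AP _ uA)) _ pu.
Qed.

Lemma ind_cover (U : finType) (P A : {set {set U}}) D p :
  partition P D -> A \subset P ->
  (p \in cover A : nat) = \sum_(u in A) (p \in u : nat).
Proof.
move=> hP AP; case: (boolP (p \in cover A)) => [/bigcupP[u0 uA pu0]|np].
  rewrite (bigD1 u0) //= pu0 big1 // => u /andP[uA' ne].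
  apply/eqP; rewrite eqb0; apply/negP => pu; move/eqP: ne; apply.
  exact: part_uniq hP (subsetP AP _ uA') (subsetP AP _ uA) pu pu0.
rewrite big1 // => u uA; apply/eqP; rewrite eqb0; apply: contra np => pu.
by apply/bigcupP; exists u.
Qed.

Lemma card_ind (V : finType) (a b : pred V) :
  #|[set g | a g && b g]| = \sum_g ((a g : nat) * (b g : nat)).
Proof.
rewrite -sum1_card big_mkcond /=; apply: eq_bigr => g _; rewrite inE.
by case: (a g); case: (b g).
Qed.

Lemma count_rel Om S R1 R2 t x y x' y' :
  is_cc Om S -> is_relation S R1 -> is_relation S R2 -> t \in S ->
  (x, y) \in t -> (x', y') \in t ->
  #|[set g | ((x, g) \in R1) && ((g, y) \in R2)]| =
  #|[set g | ((x', g) \in R1) && ((g, y') \in R2)]|.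
Proof.
move=> [hP _ _ hC] [A1 A1S ->] [A2 A2S ->] tS xy xy'.
have E u v : u \in S -> v \in S ->
  #|[set g | ((x, g) \in u) && ((g, y) \in v)]| =
  #|[set g | ((x', g) \in u) && ((g, y') \in v)]| by move=> uS vS; exact: (hC u v t uS vS tS _ _ _ _ xy xy').
have F x0 y0 : #|[set g | ((x0, g) \in cover A1) && ((g, y0) \in cover A2)]| =
   \sum_(u in A1) \sum_(v in A2) #|[set g | ((x0, g) \in u) && ((g, y0) \in v)]|.
  rewrite card_ind.
  under eq_bigr do rewrite (ind_cover _ hP A1S) (ind_cover _ hP A2S) big_distrlr.
  rewrite exchange_big; apply: eq_bigr => u _; rewrite exchange_big.
  by apply: eq_bigr => v _; rewrite card_ind.
rewrite !F; apply: eq_bigr => u uA; apply: eq_bigr => v vA.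
by apply: E; [apply: (subsetP A1S) | apply: (subsetP A2S)].
Qed.

Definition rcomp (R1 R2 : {set T * T}) : {set T * T} :=
  [set p | [exists g, ((p.1, g) \in R1) && ((g, p.2) \in R2)]].

Lemma comp_rel Om S R1 R2 :
  is_cc Om S -> is_relation S R1 -> is_relation S R2 -> is_relation S (rcomp R1 R2).
Proof.
move=> hS h1 h2; have hP := hS; case: hP => hP _ _ _.
apply: (rel_of hP).
  apply/subsetP => -[a b]; rewrite inE => /existsP[g /andP[ag gb]].
  have := subsetP (rel_subD hP h1) _ ag; have := subsetP (rel_subD hP h2) _ gb.
  by rewrite !inE /= => /andP[_ ->] /andP[-> _].
move=> s sS [x y] pxy; rewrite inE /= => /existsP[g /andP[xg gy]].
apply/subsetP => -[x' y'] pxy'; rewrite inE /=.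
have := count_rel hS h1 h2 sS pxy pxy'.
have : 0 < #|[set g | ((x, g) \in R1) && ((g, y) \in R2)]|.
  by apply/card_gt0P; exists g; rewrite inE xg gy.
move=> H1 H2; rewrite H2 in H1; case/card_gt0P: H1 => g'; rewrite inE => H.
by apply/existsP; exists g'.
Qed.

Lemma complete_of_gb Om S Pi Q :
  gen_base Om S Pi -> Pi_fission_cond Om S Pi Q -> complete Q.
Proof.
move=> [S' [[[hS' _ _ _] _ _] min] cS'] cQ; have [[hQ _ _ _] _ _] := cQ.
move=> q qQ; have [p pq] := part_neq0 hQ qQ.
have pD := subsetP (part_sub hQ qQ) _ pq.
have [b bS pb] := part_cover hS' pD.
have /cards1P [p0 bE] : #|b| == 1 by rewrite cS'.
move: pb; rewrite bE inE => /eqP ?; subst p0.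
have : is_relation S' [set p].
  by exists [set b]; [rewrite sub1set | rewrite cover1].
move/(min Q cQ) => hR.
have qs := rel_sub hQ hR qQ pq (set11 p).
suff -> : q = [set p] by rewrite cards1.
apply/eqP; rewrite eqEsubset qs sub1set pq //.
Qed.
End Gen.

Lemma disj_of (U : finType) (A B : {set U}) :
  (forall p, p \in A -> p \in B -> False) -> [disjoint A & B].
Proof.
move=> H; rewrite -setI_eq0; apply/eqP/setP => p; rewrite !inE.
by apply/negP => /andP[pA pB]; apply: (H p).
Qed.

Section Main.
Variables T1 T2 : finType.
Notation T := (T1 * T2)%type.
Variable X : {set {set T * T}}.
Hypothesis hX : is_cc [set: T] X.
Hypothesis he : is_relation X (@wr_e T1 T2).

Definition sig (p : T * T) : T2 * T2 := (p.1.2, p.2.2).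
Definition proj (s : {set T * T}) : {set T2 * T2} := sig @: s.
Definition hull (R : {set T * T}) := rcomp (rcomp (@wr_e T1 T2) R) (@wr_e T1 T2).

Lemma hP : partition X (setX [set: T] [set: T]).
Proof. by case: hX. Qed.

Lemma mem_hull R p : (p \in hull R) = (sig p \in proj R).
Proof.
apply/idP/idP.
  rewrite inE => /existsP[h /andP[]]; rewrite inE => /existsP[g /andP[]].
  rewrite !inE /= => /eqP e1 gh /eqP e2.
  by apply/imsetP; exists (g, h) => //; rewrite /sig /= e1 e2.
case/imsetP => -[g h] gh; rewrite /sig /= => -[e1 e2].
rewrite inE; apply/existsP; exists h; rewrite !inE /= e2 eqxx andbT.
by apply/existsP; exists g; rewrite !inE /= e1 eqxx gh.
Qed.

Lemma rel1 s : s \in X -> is_relation X s.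
Proof. by move=> sX; exists [set s]; [rewrite sub1set | rewrite cover1]. Qed.

Lemma hull_rel R : is_relation X R -> is_relation X (hull R).
Proof. by move=> hR; apply: (comp_rel hX) => //; apply: (comp_rel hX). Qed.

Lemma proj_sub s R q : s \in X -> is_relation X R -> q \in proj s -> q \in proj R ->
  proj s \subset proj R.
Proof.
move=> sX hR /imsetP[r rs ->] rR.
have sH : s \subset hull R by apply: (rel_sub hP (hull_rel hR) sX rs); rewrite mem_hull.
apply/subsetP => _ /imsetP[r' r's ->]; by rewrite -mem_hull (subsetP sH).
Qed.

Lemma in_e s p : s \in X -> p \in s -> p.1.2 = p.2.2 -> s \subset (@wr_e T1 T2).
Proof. move=> sX ps e; apply: (rel_sub hP he sX ps); by rewrite inE e. Qed.

Definition Q := proj @: X.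

Lemma Q_part (t1 : T1) : partition Q (setX [set: T2] [set: T2]).
Proof.
apply/and3P; split.
- apply/eqP/setP => -[a b]; rewrite !inE; apply/bigcupP.
  have pin : ((t1, a), (t1, b)) \in setX [set: T] [set: T] by rewrite !inE.
  have [s sX ps] := part_cover hP pin.
  exists (proj s); first by apply/imsetP; exists s.
  by apply/imsetP; exists ((t1, a), (t1, b)).
- apply/trivIsetP => _ _ /imsetP[s sX ->] /imsetP[s' s'X ->] ne.
  apply: disj_of => q q1 q2; move/eqP: ne; apply; apply/eqP.
  by rewrite eqEsubset (proj_sub sX (rel1 s'X) q1 q2) (proj_sub s'X (rel1 sX) q2 q1).
- apply/negP => /imsetP[s sX e]; have [p ps] := part_neq0 hP sX.
  by move/setP: e => /(_ (sig p)); rewrite inE imset_f.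
Qed.

Lemma transp_proj s : transp (proj s) = proj (transp s).
Proof.
apply/setP => -[a b]; apply/idP/idP; rewrite inE.
  case/imsetP => -[x y] xy [-> ->]; apply/imsetP; exists (y, x) => //; by rewrite inE.
case/imsetP => -[x y]; rewrite inE /= => yx [-> ->]; apply/imsetP; by exists (y, x).
Qed.

Lemma Q_cc (t1 : T1) : is_cc [set: T2] Q.
Proof.
have hQ := Q_part t1.
have [_ hd ht hc] := hX.
split => //.
- apply: (rel_of hQ).
    by apply/subsetP => -[a b]; rewrite !inE.
  move=> _ /imsetP[s sX ->] _ /imsetP[p ps ->]; rewrite !inE /= => /andP[/eqP e _].
  have se := in_e sX ps e.
  apply/subsetP => _ /imsetP[q qs ->]; move: (subsetP se _ qs); rewrite !inE /=.
  by move=> /eqP ->; rewrite eqxx.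
- move=> _ /imsetP[s sX ->]; rewrite transp_proj; apply/imsetP; exists (transp s) => //.
  exact: ht.
move=> _ _ _ /imsetP[r0 r0X ->] /imsetP[s0 s0X ->] /imsetP[t0 t0X ->] a b a' b'.
move=> /imsetP[[x0 y0] qt [-> ->]] /imsetP[[x1 y1] q1t [-> ->]].
have K (x y : T) : #|[set z | ((x, z) \in hull r0) && ((z, y) \in hull s0)]| =
   #|T1| * #|[set g | ((x.2, g) \in proj r0) && ((g, y.2) \in proj s0)]|.
  rewrite -cardsT -cardsX; apply: eq_card => -[u c]; rewrite in_set !mem_hull in_setX in_setT /= in_set.
  by [].
have := count_rel hX (hull_rel (rel1 r0X)) (hull_rel (rel1 s0X)) t0X qt q1t.
rewrite !K => /eqP; rewrite eqn_pmul2l; first by move/eqP.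
by apply/card_gt0P; exists t1.
Qed.

Notation W a := (setX (@Omega_a T1 T2 a) (@Omega_a T1 T2 a)).
Definition Ra (a : T2) := restr X (@Omega_a T1 T2 a).

Lemma inRa a q : (q \in Ra a) = (q != set0) && (q \in [set s :&: W a | s in X]).
Proof. by rewrite /Ra /restr in_setD1. Qed.

Lemma W_sub_e a s : s \in X -> s :&: W a != set0 -> s \subset (@wr_e T1 T2).
Proof.
move=> sX /set0Pn[p]; rewrite !inE => /andP[ps /andP[/eqP e1 /eqP e2]].
by apply: (in_e sX ps); rewrite e1 e2.
Qed.

Lemma Ra_part a : partition (Ra a) (W a).
Proof.
apply/and3P; split.
- apply/eqP/setP => p; apply/bigcupP/idP.
    case=> q; rewrite inRa => /andP[_ /imsetP[s _ ->]]; by rewrite inE => /andP[].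
  move=> pW; have pT : p \in setX [set: T] [set: T] by rewrite !inE.
  have [s sX ps] := part_cover hP pT.
  exists (s :&: W a); last by rewrite inE ps.
  rewrite inRa; apply/andP; split; last by apply/imsetP; exists s.
  by apply/set0Pn; exists p; rewrite inE ps.
- apply/trivIsetP => q1 q2; rewrite !inRa => /andP[_ /imsetP[s1 s1X ->]].
  move=> /andP[_ /imsetP[s2 s2X ->]] ne; apply: disj_of => p.
  rewrite !inE => /andP[p1 _] /andP[p2 _]; move/eqP: ne; apply.
  by rewrite (part_uniq hP s1X s2X p1 p2).
- by rewrite inRa eqxx.
Qed.

Lemma Ra_cc a : is_cc (@Omega_a T1 T2 a) (Ra a).
Proof.
have hR := Ra_part a.
have [_ hd ht hc] := hX.
split => //.
- apply: (rel_of hR).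
    by apply/subsetP => -[x y]; rewrite !inE /= => /andP[/eqP -> ->].
  move=> q; rewrite inRa => /andP[_ /imsetP[s sX ->]] p; rewrite inE => /andP[ps pW] pd.
  have sd : s \subset diagS [set: T].
    by apply: (rel_sub hP hd sX ps); move: pd; rewrite !inE => /andP[-> _].
  apply/subsetP => r; rewrite !inE => /andP[rs /andP[r1 _]].
  by move: (subsetP sd _ rs); rewrite !inE => /andP[-> _]; rewrite r1.
- move=> q; rewrite !inRa => /andP[ne /imsetP[s sX qE]]; subst q.
  have E : transp (s :&: W a) = transp s :&: W a.
    by apply/setP => -[x y]; rewrite !inE /=; case: ((y, x) \in s) => /=; [exact: andbC | done].
  rewrite E; apply/andP; split.
    case/set0Pn: ne => -[x y] H; move: H; rewrite !inE /= => /andP[xy /andP[x1 y1]].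
    by apply/set0Pn; exists (y, x); rewrite !inE /= xy x1 y1.
  by apply/imsetP; exists (transp s) => //; apply: ht.
move=> r s t; rewrite !inRa => /andP[rn /imsetP[r0 r0X rE]] /andP[sn /imsetP[s0 s0X sE]].
move=> /andP[_ /imsetP[t0 t0X ->]] x y x' y'; subst r s.
rewrite !inE => /andP[xy /andP[x1 y1]] /andP[xy' /andP[x1' y1']].
have re := W_sub_e r0X rn; have se := W_sub_e s0X sn.
have E (u v : T) : u.2 == a -> v.2 == a ->
  [set g | ((u, g) \in r0 :&: W a) && ((g, v) \in s0 :&: W a)] =
  [set g | ((u, g) \in r0) && ((g, v) \in s0)].
  move=> ua va; apply/setP => g; rewrite !inE /= ua va /= !andbT.
  case: (boolP ((u, g) \in r0)) => //= ug.
  move: (subsetP re _ ug); rewrite !inE /= => /eqP <-; by rewrite ua andbT.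
rewrite E // E //; exact: (hc r0 s0 t0 r0X s0X t0X _ _ _ _ xy xy').
Qed.
End Main.

Section Main2.
Variables T1 T2 : finType.
Notation T := (T1 * T2)%type.
Variable X : {set {set T * T}}.
Hypothesis hX : is_cc [set: T] X.
Hypothesis he : is_relation X (@wr_e T1 T2).
Variable S : {set {set T * T}}.
Variable S2 : {set {set T2 * T2}}.
Variable Pi : {set {set T}}.
Hypothesis hfis : fission S X.
Hypothesis hfib : forall G, G \in Pi -> union_of_fibers X G.
Hypothesis hquot : quot [set: T] S (@wr_e T1 T2) = @img2 T1 T2 S2.

Notation Om a := (@Omega_a T1 T2 a).
Notation W a := (setX (Om a) (Om a)).

Lemma relS s : s \in S -> is_relation X s.
Proof. by move=> sS; apply: hfis; exists [set s]; [rewrite sub1set | rewrite cover1]. Qed.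

Lemma Ra_cond a : Pi_fission_cond (Om a) (restr S (Om a)) [set G :&: Om a | G in Pi]
  (Ra X a).
Proof.
have hR := Ra_part hX a.
split; first exact: Ra_cc.
- move=> _ [A AS ->]; apply: (rel_of hR).
    apply/subsetP => p /bigcupP[u /(subsetP AS)]; rewrite /restr in_setD1.
    by case/andP=> _ /imsetP[v _ ->]; rewrite inE => /andP[].
  move=> q; rewrite inRa => /andP[_ /imsetP[u uX ->]] p; rewrite inE => /andP[pu pW].
  case/bigcupP=> v' v'A; have := subsetP AS _ v'A; rewrite /restr in_setD1.
  case/andP=> _ /imsetP[v vS vE]; subst v'; rewrite inE => /andP[pv _].
  have uv := rel_sub (hP hX) (relS vS) uX pu pv.
  apply/subsetP => r; rewrite inE => /andP[ru rW]; apply/bigcupP; exists (v :&: W a) => //.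
  by rewrite inE (subsetP uv _ ru).
move=> _ /imsetP[G GPi ->]; have [F hF GE] := hfib GPi.
exists [set D :&: Om a | D in F & D :&: Om a != set0].
  move=> _ /imsetP[D Din ->]; move: Din; rewrite inE => /andP[DF ne].
  rewrite /is_fiber inRa; apply/andP; split.
    case/set0Pn: ne => x; rewrite inE => /andP[xD xO]; apply/set0Pn; exists (x, x).
    by move: xO; rewrite !inE eqxx xD /=.
  apply/imsetP; exists (diagS D); first exact: hF.
  apply/setP => -[x y]; rewrite !inE /=.
  by case: eqP => //= <-; rewrite andbb; case: (x \in D).
rewrite GE; apply/setP => x; apply/idP/idP.
  rewrite inE => /andP[/bigcupP[D DF xD] xO]; apply/bigcupP; exists (D :&: Om a).
    by apply/imsetP; exists D => //; rewrite inE DF; apply/set0Pn; exists x; rewrite inE xD.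
  by rewrite inE xD.
case/bigcupP=> _ /imsetP[D Din ->]; move: Din; rewrite inE => /andP[DF _].
rewrite !inE => /andP[xD ->].
by rewrite andbT; apply/bigcupP; exists D.
Qed.

Lemma ecl (x : T) : [set y in [set: T] | (x, y) \in @wr_e T1 T2] = Om x.2.
Proof. by apply/setP => y; rewrite !inE eq_sym. Qed.

Lemma S2_proj s2 : s2 \in S2 -> exists2 s, s \in S & proj s = s2.
Proof.
move=> s2S.
have : [set (Om p.1, Om p.2) | p in s2] \in @img2 T1 T2 S2 by apply: imset_f.
rewrite -hquot /quot in_setD1 => /andP[_ /imsetP[s sS E]]; exists s => //.
apply/setP => -[a b]; apply/idP/idP.
  case/imsetP => -[x y] xy; rewrite /sig /= => -[-> ->].
  have : (Om x.2, Om y.2) \in [set (Om p.1, Om p.2) | p in s2].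
    rewrite E inE /= /eclasses -!ecl !imset_f ?in_setT //=.
    apply/existsP; exists x; rewrite ecl !inE eqxx /=.
    by apply/existsP; exists y; rewrite !inE eqxx.
  case/imsetP => -[a' b'] ab /= [Ea Eb].
  have : x \in Om a' by rewrite -Ea inE.
  have : y \in Om b' by rewrite -Eb inE.
  by rewrite !inE => /eqP -> /eqP ->.
move=> ab; have : (Om a, Om b) \in [set (Om p.1, Om p.2) | p in s2].
  by apply/imsetP; exists (a, b).
rewrite E inE => /and3P[_ _ /existsP[x /andP[xa /existsP[y /andP[yb xy]]]]].
apply/imsetP; exists (x, y) => //; move: xa yb; rewrite /sig !inE /=.
by move=> /eqP -> /eqP ->.
Qed.

Lemma Q_cond (t1 : T1) : Pi_fission_cond [set: T2] S2
  [set [set x.2 | x in G] | G : {set T1 * T2} in Pi] (Q X).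
Proof.
have hQ := Q_part hX he t1.
split; first exact: Q_cc.
- move=> _ [A AS ->]; apply: (rel_of hQ); first by apply/subsetP => -[a b]; rewrite !inE.
  move=> _ /imsetP[s sX ->] p ps /bigcupP[s2 s2A ps2].
  have [s0 s0S E] := S2_proj (subsetP AS _ s2A).
  have := proj_sub hX he sX (relS s0S) ps; rewrite E => /(_ ps2) sub.
  apply/subsetP => r /(subsetP sub) rs2; apply/bigcupP; by exists s2.
move=> _ /imsetP[G GPi ->]; have [F hF GE] := hfib GPi.
exists [set [set x.2 | x in D] | D : {set T} in F].
  move=> _ /imsetP[D DF ->]; rewrite /is_fiber; apply/imsetP; exists (diagS D).
    exact: hF.
  apply/setP => -[a b]; rewrite !inE /=; apply/idP/idP.
    case/andP=> /eqP <- /imsetP[x xD ->]; apply/imsetP; exists (x, x) => //.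
    by rewrite !inE eqxx.
  case/imsetP => -[x y]; rewrite !inE /= => /andP[/eqP <- xD] [-> ->].
  by rewrite eqxx /=; apply/imsetP; exists x.
rewrite GE; apply/setP => a; apply/idP/idP.
  case/imsetP => x /bigcupP[D DF xD] ->; apply/bigcupP; exists [set x.2 | x in D].
    by apply/imsetP; exists D.
  by apply/imsetP; exists x.
case/bigcupP => _ /imsetP[D DF ->] /imsetP[x xD ->]; apply/imsetP; exists x => //.
by apply/bigcupP; exists D.
Qed.

Lemma X_complete
  (h1 : forall a : T2, gen_base (Om a) (restr S (Om a)) [set G :&: Om a | G in Pi])
  (h2 : gen_base [set: T2] S2 [set [set x.2 | x in G] | G : {set T1 * T2} in Pi]) :
  complete X.
Proof.
have hP' := hP hX; have [_ hd _ hc] := hX.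
move=> s sX; have [[x y] pxy] := part_neq0 hP' sX.
have cQ := complete_of_gb h2 (Q_cond x.1).
have cR a := complete_of_gb (h1 a) (Ra_cond a).
have dsing (z : T) : [set (z, z)] \in X.
  have zT : (z, z) \in setX [set: T] [set: T] by rewrite !inE.
  have [d dX zd] := part_cover hP' zT.
  have /cards1P[q qE] : #|proj d| == 1 by rewrite cQ // imset_f.
  have zq : sig (z, z) \in proj d by apply: imset_f.
  move: zq; rewrite qE inE => /eqP qz; subst q.
  have dW : d \subset W z.2.
    apply/subsetP => r rd; have : sig r \in proj d by apply: imset_f.
    rewrite qE inE /sig => /eqP [e1 e2]; by rewrite !inE e1 e2 eqxx.
  have dR : d \in Ra X z.2.
    rewrite inRa; apply/andP; split; first by apply/set0Pn; exists (z, z).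
    by apply/imsetP; exists d => //; apply/esym/setIidPl.
  have /cards1P[r rE] : #|d| == 1 by rewrite (cR z.2).
  by move: zd; rewrite rE inE => /eqP zr; rewrite zr -rE.
have sub : s \subset [set (x, y)].
  apply/subsetP => -[x' y'] qs; rewrite inE.
  have H1 := hc _ _ _ (dsing x) sX sX _ _ _ _ pxy qs.
  have H2 := hc _ _ _ sX (dsing y) sX _ _ _ _ pxy qs.
  have : 0 < #|[set g | ((x, g) \in [set (x, x)]) && ((g, y) \in s)]|.
    by apply/card_gt0P; exists x; rewrite !inE eqxx.
  rewrite H1 => /card_gt0P[g]; rewrite !inE => /andP[/eqP [-> _] _].
  have : 0 < #|[set g | ((x, g) \in s) && ((g, y) \in [set (y, y)])]|.
    by apply/card_gt0P; exists y; rewrite !inE eqxx pxy.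
  rewrite H2 => /card_gt0P[g']; rewrite !inE => /andP[_ /eqP [_ ->]].
  by [].
suff -> : s = [set (x, y)] by rewrite cards1.
by apply/eqP; rewrite eqEsubset sub sub1set.
Qed.
End Main2.

Lemma compl_cc (U : finType) :
  is_cc [set: U] [set [set p] | p : U * U].
Proof.
have hP : partition [set [set p] | p : U * U] (setX [set: U] [set: U]).
  apply/and3P; split.
  - apply/eqP/setP => p; rewrite !inE; apply/bigcupP; exists [set p].
      by apply: imset_f. by rewrite inE.
  - apply/trivIsetP => _ _ /imsetP[p _ ->] /imsetP[q _ ->] ne.
    apply: disj_of => r; rewrite !inE => /eqP -> /eqP e; by move: ne; rewrite e eqxx.
  - apply/negP => /imsetP[p _ e]; by move/setP: e => /(_ p); rewrite !inE eqxx.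
split => //.
- apply: (rel_of hP); first by apply/subsetP => -[a b]; rewrite !inE.
  move=> _ /imsetP[q _ ->] p; rewrite inE => /eqP -> qd; by rewrite sub1set.
- move=> _ /imsetP[p _ ->]; apply/imsetP; exists (p.2, p.1) => //.
  apply/setP => -[a b]; rewrite !inE; case: p => c d /=.
  by rewrite !xpair_eqE andbC.
move=> r s _ _ _ /imsetP[t _ ->] x y x' y'; rewrite !inE => /eqP e1 /eqP e2; rewrite -e1 in e2; case: e2 => -> ->.
by [].
Qed.

Theorem lemma5p1 (T1 T2 : finType)
  (S1 : {set {set T1 * T1}}) (S2 : {set {set T2 * T2}})
  (S : {set {set (T1 * T2) * (T1 * T2)}}) (Pi : {set {set T1 * T2}}) :
  is_cc [set: T1] S1 -> is_cc [set: T2] S2 ->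
  is_wreath S1 S2 S ->
  (forall a : T2, gen_base (@Omega_a T1 T2 a) (restr S (@Omega_a T1 T2 a))
                           [set G :&: @Omega_a T1 T2 a | G in Pi]) ->
  gen_base [set: T2] S2 [set [set x.2 | x in G] | G : {set T1 * T2} in Pi] ->
  gen_base [set: T1 * T2] S Pi.
Proof.
move=> _ _ [[_ heS _ hquot] _] h1 h2.
have cc := compl_cc (T1 * T2)%type; have hPc := cc; case: hPc => hPc _ _ _.
exists [set [set p] | p : (T1 * T2) * (T1 * T2)]; last first.
  by move=> _ /imsetP[p _ ->]; rewrite cards1.
split; first split => //.
- move=> R _; apply: (rel_of hPc); first by apply/subsetP => -[a b]; rewrite !inE.
  by move=> _ /imsetP[q _ ->] p; rewrite inE => /eqP -> qR; rewrite sub1set.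
- move=> G _; exists [set [set x] | x in G].
    move=> _ /imsetP[x _ ->]; rewrite /is_fiber; apply/imsetP; exists (x, x) => //.
    apply/setP => -[a b]; rewrite !inE /= xpair_eqE; apply/andP/andP => [[/eqP -> ->] | [/eqP -> /eqP ->]] //.

  apply/setP => x; apply/idP/bigcupP.
    by move=> xG; exists [set x]; [apply: imset_f | rewrite inE].
  by case=> _ /imsetP[y yG ->]; rewrite inE => /eqP ->.
move=> X [hX hfis hfib].
have he : is_relation X (@wr_e T1 T2) by apply: hfis.
have cX := X_complete hX he hfis hfib hquot h1 h2.
move=> R _; apply: (rel_of (hP hX)); first by apply/subsetP => -[a b]; rewrite !inE.
move=> s sX p ps pR; have /cards1P[q qE] : #|s| == 1 by rewrite cX.
by move: ps; rewrite qE inE => /eqP pq; rewrite -qE; apply/subsetP => r; rewrite qE inE => /eqP ->; rewrite -pq.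
Qed.
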